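(* Let $d\ge1$, let $G$ be a $k$-fold $\mathcal{R}_d$-circuit ($k\ge1$) and let $G*v$ be its cone over a new vertex $v$. If all edges incident with $v$ lie in the same part of the principal partition of $G*v$ (as a $k$-fold $\mathcal{R}_{d+1}$-circuit), then $k=1$.
   Context: For a graph $G=(V,E)$ and a generic $p:V\to\mathbb{R}^d$ (coordinates algebraically independent over $\mathbb{Q}$), the rigidity matrix has a row for each $uv\in E$ with $p(u)-p(v)$ in the $d$ columns of $u$, $p(v)-p(u)$ in those of $v$, zeros elsewhere; $\mathcal{R}_d$ is its row matroid, with rank $r_d$. A set of edges is cyclic if it is a union of $\mathcal{R}_d$-circuits; $(V,D)$ is a $k$-fold $\mathcal{R}_d$-circuit if $D$ is cyclic and $r_d(D)=|D|-k$. Its principal partition is the partition $\{A_1,\dots,A_\ell\}$ of $D$ such that $\{D\setminus A_i\}$ is exactly the set of $(k-1)$-fold $\mathcal{R}_d$-circuits contained in $D$. The cone $G*v$ is obtained by adding a new vertex $v$ adjacent to every vertex of $G$; $G*v$ is a $k$-fold $\mathcal{R}_{d+1}$-circuit whenever $G$ is a $k$-fold $\mathcal{R}_d$-circuit. *)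

(* Defs.v *)
From HB Require Import structures.
From mathcomp Require Import all_boot all_order all_algebra.
From mathcomp Require Import reals.
From mathcomp Require Import mpoly.

Set Implicit Arguments.
Unset Strict Implicit.
Unset Printing Implicit Defensive.

Import Order.TTheory GRing.Theory Num.Theory.
Local Open Scope ring_scope.

(* Graphs on the vertex set 'I_n.  An edge uv is stored as the ordered pair
   (u, v) with u < v, and an edge set is a finite set of such pairs. *)
Definition edgeset (n : nat) := {set 'I_n * 'I_n}.

Definition simple_edges n (E : edgeset n) : Prop :=
  forall e, e \in E -> (e.1 < e.2)%N.

(* A realization p : V -> R^d is the n x d matrix whose u-th row is p(u). *)

(* The n*d columns
   are indexed via mxvec (column (u, j) <-> coordinate j of vertex u). *)
Definition rig_row (R : nzRingType) n d (p : 'M[R]_(n, d)) (e : 'I_n * 'I_n)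
  : 'rV[R]_(n * d) :=
  mxvec (\matrix_(w < n, j < d)
           (if w == e.1 then p e.1 j - p e.2 j
            else if w == e.2 then p e.2 j - p e.1 j else 0)).

Definition rig_rank (R : fieldType) n d (p : 'M[R]_(n, d)) (X : edgeset n) : nat :=
  \rank (\sum_(e in X) <<rig_row p e>>)%MS.

(* p is generic: its n*d coordinates are algebraically independent over Q,
   i.e. no nonzero rational polynomial in n*d variables vanishes at them. *)
Definition generic (R : realType) n d (p : 'M[R]_(n, d)) : Prop :=
  forall P : {mpoly rat[n * d]}, P != 0 ->
    mmap (fun c : rat => ratr c) (fun i => mxvec p 0 i) P != 0.

Section MatroidNotions.
Variables (n : nat) (r : edgeset n -> nat).

Definition dependent (X : edgeset n) : Prop := (r X < #|X|)%N.

Definition circuit (C : edgeset n) : Prop :=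
  dependent C /\ forall Y : edgeset n, Y \proper C -> ~ dependent Y.

Definition cyclic (D : edgeset n) : Prop :=
  exists Cs : {set edgeset n},
    (forall C, C \in Cs -> circuit C) /\ D = \bigcup_(C in Cs) C.

Definition kfold_circuit (k : nat) (D : edgeset n) : Prop :=
  cyclic D /\ (r D + k = #|D|)%N.

Definition principal_partition (k : nat) (D : edgeset n)
    (P : {set edgeset n}) : Prop :=
  partition P D /\
  forall X : edgeset n, X \subset D ->
    (kfold_circuit k.-1 X <-> exists2 A, A \in P & X = D :\: A).
End MatroidNotions.

(* The cone G*v: vertices 'I_n embedded into 'I_n.+1, v = ord_max. *)
Definition vemb n (u : 'I_n) : 'I_n.+1 := widen_ord (leqnSn n) u.

Definition cone_star n : edgeset n.+1 :=
  [set (vemb u, ord_max) | u : 'I_n].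

Definition cone n (E : edgeset n) : edgeset n.+1 :=
  [set (vemb e.1, vemb e.2) | e in E] :|: cone_star n.

(* Main.v *)
Require Import Defs.
From HB Require Import structures.
From mathcomp Require Import all_boot all_order all_algebra.
From mathcomp Require Import reals.
From mathcomp Require Import mpoly.
From mathcomp Require Import zify ring lra.
From Stdlib Require Import Classical.
Set Implicit Arguments. Unset Strict Implicit. Unset Printing Implicit Defensive.
Import Order.TTheory GRing.Theory Num.Theory.

Section S.
Local Open Scope ring_scope.
Variable R : realType.

Definition ev N (h : 'I_N -> R) : {mpoly rat[N]} -> R := mmap (@ratr R) h.
Lemma evX N (h : 'I_N -> R) i : ev h 'X_i = h i.
Proof. by rewrite /ev mmapX mmap1U. Qed.

Lemma minor_ex m c (A : 'M[R]_(m, c)) :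
  exists f : 'I_(\rank A) -> 'I_m, exists g : 'I_(\rank A) -> 'I_c,
    \det (mxsub f g A) != 0.
Proof.
set B := rowsub (maxrankfun A) A.
have rB : \rank B = \rank A by apply/eqP; exact: maxrowsub_free.
have fBT : row_full B^T by rewrite /row_full mxrank_tr rB.
exists (maxrankfun A), (fullrankfun fBT).
have := fullrowsub_unit fBT; rewrite unitmxE unitfE.
have -> : rowsub (fullrankfun fBT) B^T = (mxsub (maxrankfun A) (fullrankfun fBT) A)^T.
  by apply/matrixP => i j; rewrite !mxE.
by rewrite det_tr.
Qed.

Lemma rank_mxsub m c r (f : 'I_r -> 'I_m) (g : 'I_r -> 'I_c) (A : 'M[R]_(m, c)) :
  (\rank (mxsub f g A) <= \rank A)%N.
Proof.
have -> : mxsub f g A = rowsub f (colsub g A) by apply/matrixP => i j; rewrite !mxE.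
apply: (leq_trans (mxrankS _)).
  apply/row_subP => i; rewrite row_rowsub; exact: row_sub.
rewrite -mxrank_tr -[X in (_ <= X)%N]mxrank_tr.
have -> : (colsub g A)^T = rowsub g A^T by apply/matrixP => i j; rewrite !mxE.
apply: mxrankS; apply/row_subP => i; rewrite row_rowsub; exact: row_sub.
Qed.

Definition stk (K : nzRingType) n d (x : 'M[K]_(n, d)) m (F : 'I_m -> 'I_n * 'I_n)
  : 'M[K]_(m, n * d) := \matrix_(i, c) rig_row x (F i) 0 c.

Definition Qs n d : 'M[{mpoly rat[n * d]}]_(n, d) := \matrix_(u, j) 'X_(mxvec_index u j).

Lemma map_stk n d (x : 'M[R]_(n, d)) m (F : 'I_m -> 'I_n * 'I_n) :
  map_mx (ev (fun i => mxvec x 0 i)) (stk (Qs n d) F) = stk x F.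
Proof.
apply/matrixP => i c; rewrite !mxE.
have -> : ev (fun i => mxvec x 0 i) (rig_row (Qs n d) (F i) 0 c) =
  (map_mx (ev (fun i => mxvec x 0 i)) (rig_row (Qs n d) (F i))) 0 c by rewrite mxE.
congr (fun_of_matrix _ 0 c); rewrite /rig_row map_mxvec; congr mxvec.
apply/matrixP => u j; rewrite !mxE.
case: ifP => _; first by rewrite /ev raddfB /= !mmapX !mmap1U !mxvecE.
case: ifP => _; first by rewrite /ev raddfB /= !mmapX !mmap1U !mxvecE.
by rewrite /ev raddf0.
Qed.

Lemma genmax n d (q q' : 'M[R]_(n, d)) m (F : 'I_m -> 'I_n * 'I_n) :
  generic q -> (\rank (stk q' F) <= \rank (stk q F))%N.
Proof.
move=> gq; have [f [g detnz]] := minor_ex (stk q' F).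
set P := \det (mxsub f g (stk (Qs n d) F)).
have evP x : ev (fun i => mxvec x 0 i) P = \det (mxsub f g (stk x F)).
  by rewrite /P /ev -det_map_mx map_mxsub -/(ev _) map_stk.
have Pnz : P != 0 by apply: contraNneq detnz => P0; rewrite -evP P0 /ev raddf0.
have := gq P Pnz; rewrite -/(ev _ P) evP => dq.
have : mxsub f g (stk q F) \in unitmx by rewrite unitmxE unitfE.
rewrite -row_free_unit => /eqP rk.
by apply: leq_trans (rank_mxsub f g (stk q F)); rewrite rk.
Qed.

Lemma row_stk (K : nzRingType) n d (x : 'M[K]_(n, d)) m (F : 'I_m -> 'I_n * 'I_n) i :
  row i (stk x F) = rig_row x (F i).
Proof. by apply/rowP => c; rewrite !mxE; congr (fun_of_matrix _ _ _); apply: ord1. Qed.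

Lemma rank_stk n d (x : 'M[R]_(n, d)) (Y : edgeset n) m (F : 'I_m -> 'I_n * 'I_n) :
  (forall e, e \in Y -> exists i, F i = e) -> (forall i, F i \in Y) ->
  rig_rank x Y = \rank (stk x F).
Proof.
move=> cov inY; rewrite /rig_rank; apply: eqmx_rank; apply/andP; split.
  apply/sumsmx_subP => e eY; rewrite genmxE; have [i <-] := cov e eY.
  rewrite -row_stk; exact: row_sub.
apply/row_subP => i; rewrite row_stk; apply: (sumsmx_sup (F i)) => //.
by rewrite genmxE.
Qed.

Lemma rank_le_card n d (x : 'M[R]_(n, d)) (Y : edgeset n) : (rig_rank x Y <= #|Y|)%N.
Proof.
rewrite (@rank_stk _ _ x Y _ (@enum_val _ (mem Y))).
- exact: rank_leq_row.
- by move=> e eY; exists (enum_rank_in eY e); rewrite enum_rankK_in.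
- by move=> i; apply: enum_valP.
Qed.

Lemma rank_sub n d (x : 'M[R]_(n, d)) (X Y : edgeset n) : X \subset Y ->
  (rig_rank x Y + #|X| <= rig_rank x X + #|Y|)%N.
Proof.
move=> XY; rewrite /rig_rank (big_setID X) /= (setIidPr XY).
rewrite -(cardsID X Y) (setIidPr XY).
apply: (leq_trans (leq_add (mxrank_adds_leqif _ _) (leqnn _))).
have := rank_le_card x (Y :\: X); rewrite /rig_rank => h; rewrite -addnA; apply: leq_add => //; by rewrite addnC leq_add2l.
Qed.
End S.

Section S3.
Local Open Scope ring_scope.
Variable R : realType.

Lemma rank_row_mx_ker m c1 c2 (M : 'M[R]_(m, c1)) (N : 'M_(m, c2)) :
  (\rank M + \rank (kermx M *m N) <= \rank (row_mx M N))%N.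
Proof.
have h1 := mxrank_ker (row_mx M N).
have h2 := mxrank_ker M.
have h3 := mxrank_mul_ker (kermx M) N.
have sub : (kermx (row_mx M N) <= kermx M :&: kermx N)%MS.
  have := mulmx_ker (row_mx M N); rewrite mul_mx_row => /eqP; rewrite row_mx_eq0.
  case/andP => /eqP e1 /eqP e2.
  by rewrite sub_capmx; apply/andP; split; apply/sub_kermxP.
have h4 := mxrankS sub.
have h5 := rank_leq_row M; have h6 := rank_leq_row (row_mx M N).
lia.
Qed.

Lemma vembE n (u : 'I_n) : vemb u = lift ord_max u.
Proof. by apply: val_inj; rewrite [RHS](lift_max u). Qed.

Lemma vemb_inj n : injective (@vemb n).
Proof. by move=> u w /(congr1 val) /= /val_inj. Qed.

Lemma unlift_vemb n (u : 'I_n) : unlift ord_max (vemb u) = Some u.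
Proof. by rewrite vembE liftK. Qed.

Definition qsp n d (p : 'M[R]_(n, d)) (s : 'rV[R]_n) : 'M[R]_(n.+1, d.+1) :=
  \matrix_(u, j) match unlift ord_max u with
                 | Some u' => match unlift ord_max j with
                              | Some j' => p u' j' | None => s 0 u' end
                 | None => 0 end.

Lemma qsp1 n d p s (u : 'I_n) (j : 'I_d) : qsp p s (vemb u) (lift ord_max j) = p u j.
Proof. by rewrite mxE unlift_vemb liftK. Qed.
Lemma qsp2 n d p s (u : 'I_n) : qsp (d:=d) p s (vemb u) ord_max = s 0 u.
Proof. by rewrite mxE unlift_vemb unlift_none. Qed.

Definition f1 n d (r : 'rV[R]_(n.+1 * d.+1)) : 'rV[R]_(n * d) :=
  mxvec (\matrix_(u, j) (vec_mx r) (vemb u) (lift ord_max j)).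
Definition f2 n d (r : 'rV[R]_(n.+1 * d.+1)) : 'rV[R]_n :=
  \row_u (vec_mx r) (vemb u) ord_max.

Lemma f1_lin n d : linear (@f1 n d).
Proof.
move=> a r r'; rewrite /f1 -linearP; congr mxvec.
by apply/matrixP => u j; rewrite !mxE.
Qed.
Lemma f2_lin n d : linear (@f2 n d).
Proof.
by move=> a r r'; apply/rowP => u; rewrite /f2 !mxE.
Qed.

HB.instance Definition _ n d := GRing.isLinear.Build R _ _ _ (@f1 n d) (@f1_lin n d).
HB.instance Definition _ n d := GRing.isLinear.Build R _ _ _ (@f2 n d) (@f2_lin n d).

Definition lift_e n (e : 'I_n * 'I_n) : 'I_n.+1 * 'I_n.+1 := (vemb e.1, vemb e.2).

Definition Nmx n m (F : 'I_m -> 'I_n * 'I_n) (s : 'rV[R]_n) : 'M[R]_(m, n) :=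
  \matrix_(i, u) (if u == (F i).1 then s 0 (F i).1 - s 0 (F i).2
                  else if u == (F i).2 then s 0 (F i).2 - s 0 (F i).1 else 0).

Lemma stk_C1 n d p s m (F : 'I_m -> 'I_n * 'I_n) :
  stk (qsp p s) (fun i => lift_e (F i)) *m lin1_mx (@f1 n d) = stk p F.
Proof.
apply/row_matrixP => i; rewrite row_mul !row_stk mul_rV_lin1 /= /f1 /rig_row mxvecK /lift_e /=.
set Q := qsp p s; congr mxvec; apply/matrixP => u j; rewrite !mxE /= !(inj_eq (@vemb_inj n)) !unlift_vemb !liftK.
done.
Qed.

Lemma stk_C2 n d p s m (F : 'I_m -> 'I_n * 'I_n) :
  stk (qsp p s) (fun i => lift_e (F i)) *m lin1_mx (@f2 n d) = Nmx F s.
Proof.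
apply/row_matrixP => i; rewrite row_mul !row_stk mul_rV_lin1 /= /f2 /rig_row mxvecK /lift_e /=.
set Q := qsp p s; apply/rowP => u; rewrite !mxE /= !(inj_eq (@vemb_inj n)) !unlift_vemb !unlift_none.
done.
Qed.

End S3.

Section S4.
Local Open Scope ring_scope.
Variable R : realType.

Definition dot n (u v : 'rV[R]_n) : R := (u *m v^T) 0 0.

Lemma dotE n (u v : 'rV[R]_n) : dot u v = \sum_i u 0 i * v 0 i.
Proof. by rewrite /dot mxE; apply: eq_bigr => i _; rewrite mxE. Qed.

Lemma dotZ n c (u v : 'rV[R]_n) : dot (c *: u) v = c * dot u v.
Proof. by rewrite !dotE mulr_sumr; apply: eq_bigr => i _; rewrite mxE mulrA. Qed.

Lemma dotD n (u w v : 'rV[R]_n) : dot (u + w) v = dot u v + dot w v.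
Proof. by rewrite !dotE -big_split; apply: eq_bigr => i _; rewrite mxE mulrDl. Qed.

Lemma dot_sym n (u v : 'rV[R]_n) : dot u v = dot v u.
Proof. by rewrite !dotE; apply: eq_bigr => i _; rewrite mulrC. Qed.

Lemma dot_symM n (M : 'M[R]_n) (y a : 'rV[R]_n) : M^T = M ->
  dot (y *m M) a = dot (a *m M) y.
Proof.
move=> sM; rewrite /dot.
have -> : a *m M *m y^T = (y *m M *m a^T)^T.
  by rewrite !trmx_mul trmxK sM mulmxA.
by rewrite [RHS]mxE.
Qed.

Lemma dot_self_neq0 n (a : 'rV[R]_n) : a != 0 -> dot a a != 0.
Proof.
move=> a0; rewrite dotE; apply/negP => /eqP /psumr_eq0P h.
have nn : forall i, true -> 0 <= a 0 i * a 0 i by move=> i _; rewrite -expr2 sqr_ge0.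
case/negP: a0; apply/eqP/rowP => i; rewrite mxE.
by have /eqP := h nn i isT; rewrite mulf_eq0 orbb => /eqP.
Qed.

Definition par n (u v : 'rV[R]_n) := exists a b, ((a != 0) || (b != 0)) /\ a *: u + b *: v = 0.

Lemma par_sym n (u v : 'rV[R]_n) : par u v -> par v u.
Proof. by case=> a [b [h e]]; exists b, a; rewrite orbC addrC. Qed.

Lemma par_span n (u v : 'rV[R]_n) : par u v -> v != 0 -> exists c, u = c *: v.
Proof.
case=> a [b [h e]] v0; have [a0|a0] := eqVneq a 0.
  move: h e; rewrite a0 eqxx /= scale0r add0r => b0 /eqP.
  by rewrite scaler_eq0 (negbTE b0) (negbTE v0).
exists (- (a^-1 * b)); apply: (scalerI a0).
rewrite scalerA mulrN mulrA divff // mul1r scaleNr.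
by apply/eqP; rewrite -addr_eq0 e.
Qed.

Lemma not_indep_par n (u v : 'rV[R]_n) :
  ~ (forall a b, a *: u + b *: v = 0 -> a = 0 /\ b = 0) -> par u v.
Proof.
move=> h; apply NNPP => np; apply: h => a b e.
have [a0|a0] := eqVneq a 0; have [b0|b0] := eqVneq b 0; first by split.
all: exfalso; apply: np; exists a, b; split=> //; apply/orP; by [left|right].
Qed.

Lemma R1 n (M : 'M[R]_n) (a : 'rV[R]_n) : M^T = M -> a != 0 ->
  (forall y, exists c, y *m M = c *: a) ->
  exists l, forall y, y *m M = (l * dot y a) *: a.
Proof.
move=> sM a0 h; have [ca hca] := h a.
have daa := dot_self_neq0 a0.
exists (ca / dot a a) => y; have [cy hcy] := h y.
have e : cy * dot a a = ca * dot y a.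
  by rewrite -dotZ -hcy dot_symM // hca dotZ dot_sym.
rewrite hcy; congr (_ *: _).
apply: (mulIf daa); rewrite e; field; exact: daa.
Qed.

Lemma aux1 n (a v b : 'rV[R]_n) c1 c2 :
  a + v = c1 *: b -> a + 2%:R *: v = c2 *: (2%:R *: b) -> a = (2%:R * c1 - 2%:R * c2) *: b.
Proof.
move=> h1 h2; apply/rowP => i.
move/rowP: h1 => /(_ i); move/rowP: h2 => /(_ i); rewrite !mxE => h2 h1.
have -> : a 0 i = 2%:R * (a 0 i + v 0 i) - (a 0 i + 2%:R * v 0 i) by ring.
rewrite h1 h2; ring.
Qed.

Lemma pencil n (A B : 'M[R]_n) : A^T = A -> B^T = B ->
  (forall a b, a *: A + b *: B = 0 -> a = 0 /\ b = 0) ->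
  exists s : 'rV[R]_n, forall a b, a *: (s *m A) + b *: (s *m B) = 0 -> a = 0 /\ b = 0.
Proof.
move=> sA sB ind; apply NNPP; move=> H.
have loc s : par (s *m A) (s *m B).
  apply: not_indep_par => hs; apply: H; by exists s.
have A0 : A != 0.
  apply/negP => /eqP A0; have := ind 1 0; rewrite A0 scaler0 scale0r addr0.
  by case=> // /eqP; rewrite oner_eq0.
have [x xa] : exists x : 'rV[R]_n, x *m A != 0.
  apply NNPP => nx; case/negP: A0; apply/eqP/row_matrixP => i.
  rewrite rowE row0; apply NNPP => hi; apply: nx; exists (delta_mx 0 i).
  by apply/eqP.
set a := x *m A in xa.
have [mu hmu] := par_span (par_sym (loc x)) xa.
set B' := B - mu *: A.
have sB' : B'^T = B' by rewrite /B' linearB linearZ /= sA sB.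
have xB' : x *m B' = 0 by rewrite /B' mulmxBr -scalemxAr -/a -hmu subrr.
have B'0 : B' != 0.
  apply/negP => /eqP B'0; have := ind mu (-1).
  rewrite scaleN1r -opprB -/B' B'0 oppr0 => /(_ erefl) [_ /eqP].
  by rewrite oppr_eq0 oner_eq0.
have loc' s : par (s *m A) (s *m B').
  have [al [be [h e]]] := loc s; exists (al + be * mu), be; split.
    have [be0|be0] := eqVneq be 0; last by rewrite orbT.
    by move: h; rewrite be0 eqxx mul0r addr0 orbF.
  rewrite /B' mulmxBr -scalemxAr scalerBr scalerDl scalerA addrAC -addrA.
  by rewrite subrK.
have spanB : forall y : 'rV[R]_n, exists c, y *m B' = c *: a.
  move=> y.
  have [yb0|yb0] := eqVneq (y *m B') 0; first by exists 0; rewrite scale0r.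
  set b := y *m B' in yb0.
  have e1 : (x + y) *m B' = b by rewrite mulmxDl xB' add0r.
  have e2 : (x + 2%:R *: y) *m B' = 2%:R *: b by rewrite mulmxDl xB' add0r -scalemxAl.
  have nz1 : (x + y) *m B' != 0 by rewrite e1.
  have [c1 h1] := par_span (loc' (x + y)) nz1.
  have b2 : 2%:R *: b != 0 by rewrite scaler_eq0 negb_or pnatr_eq0 yb0.
  have nz2 : (x + 2%:R *: y) *m B' != 0 by rewrite e2.
  have [c2 h2] := par_span (loc' (x + 2%:R *: y)) nz2.
  rewrite e1 mulmxDl -/a in h1; rewrite e2 mulmxDl -/a -scalemxAl in h2.
  have ha := aux1 h1 h2.
  have k0 : 2%:R * c1 - 2%:R * c2 != 0.
    by apply: contraNneq xa => k0; rewrite -/a ha k0 scale0r.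
  by exists (2%:R * c1 - 2%:R * c2)^-1; rewrite ha scalerA mulVf // scale1r.
have [l' hl'] := R1 sB' xa spanB.
have l'0 : l' != 0.
  apply: contraNneq B'0 => l0; apply/eqP/row_matrixP => i.
  by rewrite rowE row0 hl' l0 mul0r scale0r.
have xa0 : dot x a = 0.
  move/eqP: xB'; rewrite hl' scaler_eq0 (negbTE xa) orbF mulf_eq0 (negbTE l'0) /=.
  by move/eqP.
have daa := dot_self_neq0 xa.
have spanA1 y : dot y a != 0 -> exists c, y *m A = c *: a.
  move=> dy; have yb : y *m B' != 0.
    by rewrite hl' scaler_eq0 negb_or mulf_neq0 // xa.
  have [c hc] := par_span (loc' y) yb.
  by exists (c * (l' * dot y a)); rewrite hc hl' scalerA.
have spanA y : exists c, y *m A = c *: a.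
  have [dy|dy] := eqVneq (dot y a) 0; last exact: spanA1.
  have nz : dot (y + a) a != 0 by rewrite dotD dy add0r.
  have [c1 h1] := spanA1 (y + a) nz.
  have [c2 h2] := spanA1 a daa.
  exists (c1 - c2); rewrite scalerBl -h1 -h2 mulmxDl addrK //.
have [l hl] := R1 sA xa spanA.
by case/negP: xa; rewrite {1}/a hl xa0 mulr0 scale0r.
Qed.
End S4.

Section S5.
Local Open Scope ring_scope.
Variable R : realType.

Definition cf n (e : 'I_n * 'I_n) (u : 'I_n) : R := (u == e.1)%:R - (u == e.2)%:R.

Definition Lm n m (F : 'I_m -> 'I_n * 'I_n) (w : 'rV[R]_m) : 'M[R]_n :=
  \matrix_(u, v) \sum_i w 0 i * (cf (F i) u * cf (F i) v).

Lemma sum_delta n (x : 'I_n -> R) a : \sum_w x w * (w == a)%:R = x a.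
Proof.
rewrite (bigD1 a) //= eqxx mulr1 big1 ?addr0 // => w /negbTE ->.
by rewrite mulr0.
Qed.

Lemma sum_cf n (x : 'I_n -> R) e : \sum_w x w * cf e w = x e.1 - x e.2.
Proof.
rewrite /cf; under eq_bigr do rewrite mulrBr.
by rewrite sumrB !sum_delta.
Qed.

Lemma Nmx_Lm n m (F : 'I_m -> 'I_n * 'I_n) (s : 'rV[R]_n) (w : 'rV[R]_m) :
  (forall i, (F i).1 != (F i).2) -> w *m Nmx F s = s *m Lm F w.
Proof.
move=> nl; apply/rowP => u; rewrite !mxE.
under [RHS]eq_bigr do rewrite mxE mulr_sumr.
rewrite exchange_big /=; apply: eq_bigr => i _.
have -> : \sum_j s 0 j * (w 0 i * (cf (F i) j * cf (F i) u)) =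
          w 0 i * cf (F i) u * \sum_j s 0 j * cf (F i) j.
  rewrite mulr_sumr; apply: eq_bigr => j _; ring.
rewrite sum_cf mxE -mulrA; congr (_ * _).
rewrite /cf; have nli := nl i.
have [E1|ne1] := eqVneq u (F i).1.
  by rewrite E1 ?eqxx (negbTE nli) subr0 mul1r.
have [E2|ne2] := eqVneq u (F i).2.
  by rewrite sub0r mulN1r opprB.
by rewrite ?(negbTE ne2) subrr mul0r.
Qed.

Lemma Lm_sym n m (F : 'I_m -> 'I_n * 'I_n) w : (Lm F w)^T = Lm F w.
Proof. by apply/matrixP => u v; rewrite !mxE; apply: eq_bigr => i _; congr (_ * _); apply: mulrC. Qed.

Lemma Lm_lin n m (F : 'I_m -> 'I_n * 'I_n) a b w1 w2 :
  Lm F (a *: w1 + b *: w2) = a *: Lm F w1 + b *: Lm F w2.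
Proof.
apply/matrixP => u v; rewrite !mxE !mulr_sumr -big_split; apply: eq_bigr => i _.
by rewrite !mxE /= mulrDl !mulrA.
Qed.

Lemma cf0 n (e e' : 'I_n * 'I_n) : (e.1 < e.2)%N -> (e'.1 < e'.2)%N -> e' != e ->
  cf e' e.1 * cf e' e.2 = 0.
Proof.
case: e => a b; case: e' => a' b' /= h h' ne; rewrite /cf -!val_eqE /=.
case: eqP => E1; case: eqP => E2; case: eqP => E3; case: eqP => E4;
  rewrite /= ?subrr ?mul0r ?mulr0 //; try (exfalso; lia).
all: case/eqP: ne; congr pair; apply/val_inj => /=; lia.
Qed.

Lemma Lm_inj n m (F : 'I_m -> 'I_n * 'I_n) w :
  (forall i, ((F i).1 < (F i).2)%N) -> injective F -> Lm F w = 0 -> w = 0.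
Proof.
move=> lt Finj /matrixP h; apply/rowP => i; move: (h (F i).1 (F i).2).
rewrite !mxE (bigD1 i) //= big1 ?addr0; last first.
  move=> j ji; rewrite cf0 ?mulr0 //; apply: contra ji => /eqP /Finj ->.
  by [].
have ne : (F i).2 != (F i).1 by rewrite -val_eqE /= neq_ltn lt orbT.
rewrite /cf eqxx (negbTE ne) eq_sym (negbTE ne) eqxx subr0 sub0r mul1r mulrN mulr1.
by move/eqP; rewrite oppr_eq0 => /eqP.
Qed.

Lemma rank_col2 n (u v : 'rV[R]_n) :
  (forall a b, a *: u + b *: v = 0 -> a = 0 /\ b = 0) -> \rank (col_mx u v) = 2.
Proof.
move=> ind; apply/eqP; change (row_free (col_mx u v)); rewrite -kermx_eq0.
apply/eqP/row_matrixP => i; rewrite row0.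
set k := row i (kermx (col_mx u v)).
have hk : k *m col_mx u v = 0 by rewrite /k -row_mul mulmx_ker row0.
rewrite -[k]hsubmxK mul_row_col in hk.
rewrite [lsubmx k]mx11_scalar [rsubmx k]mx11_scalar !mul_scalar_mx in hk.
have [e1 e2] := ind _ _ hk.
rewrite -[k]hsubmxK [lsubmx k]mx11_scalar [rsubmx k]mx11_scalar e1 e2.
by rewrite raddf0 row_mx0.
Qed.

End S5.

Section S6.
Local Open Scope ring_scope.
Variable R : realType.

Lemma main n d (G : edgeset n) (p : 'M[R]_(n, d)) (q : 'M[R]_(n.+1, d.+1)) k :
  simple_edges G -> generic q -> (rig_rank p G + k)%N = #|G| -> (2 <= k)%N ->
  (rig_rank p G + 2 <= rig_rank q [set lift_e e | e in G])%N.
Proof.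
move=> sG gq hk k2.
pose F : 'I_#|G| -> 'I_n * 'I_n := @enum_val _ (mem G).
have FG i : F i \in G := enum_valP i.
have Finj : injective F := @enum_val_inj _ (mem G).
have rp : rig_rank p G = \rank (stk p F).
  apply: rank_stk => // e eG; exists (enum_rank_in eG e).
  by rewrite /F enum_rankK_in.
have rq : rig_rank q [set lift_e e | e in G] = \rank (stk q (fun i => lift_e (F i))).
  apply: rank_stk; last by move=> i; apply: imset_f.
  move=> e /imsetP [e0 e0G ->]; exists (enum_rank_in e0G e0).
  by rewrite /F enum_rankK_in.
set M := stk p F.
have rk : (2 <= \rank (kermx M))%N.
  rewrite mxrank_ker -rp; lia.
set W := row_base (kermx M).
have rk0 : (0 < \rank (kermx M))%N by lia.
pose i0 : 'I_(\rank (kermx M)) := Ordinal rk0.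
pose i1 : 'I_(\rank (kermx M)) := Ordinal rk.
pose w1 := row i0 W; pose w2 := row i1 W.
have indw a b : a *: w1 + b *: w2 = 0 -> a = 0 /\ b = 0.
  move=> e.
  have : (a *: delta_mx (0 : 'I_1) i0 + b *: delta_mx (0 : 'I_1) i1) *m W = 0 *m W.
    rewrite mulmxDl -!scalemxAl -!rowE [in RHS]mul0mx; exact: e.
  move/(row_free_inj (row_base_free _)) => /matrixP h.
  have := h 0 i0; have := h 0 i1; rewrite !mxE /= !mulr0 !mulr1 add0r addr0.
  by move=> -> ->.
have lt i : ((F i).1 < (F i).2)%N by apply: sG.
have nl i : (F i).1 != (F i).2 by rewrite -val_eqE /= neq_ltn lt.
have indL a b : a *: Lm F w1 + b *: Lm F w2 = 0 -> a = 0 /\ b = 0.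
  by rewrite -Lm_lin => /(Lm_inj lt Finj) /indw.
have [s hs] := pencil (Lm_sym F w1) (Lm_sym F w2) indL.
have h1 := genmax (qsp p s) (fun i => lift_e (F i)) gq.
have h2 : (\rank (row_mx M (Nmx F s)) <= \rank (stk (qsp p s) (fun i => lift_e (F i))))%N.
  rewrite /M -(stk_C1 p s F) -(stk_C2 p s F) -mul_mx_row; exact: mxrankM_maxl.
have h3 := rank_row_mx_ker M (Nmx F s).
have h4 : (2 <= \rank (kermx M *m Nmx F s))%N.
  have sub : (col_mx w1 w2 <= kermx M)%MS.
    rewrite col_mx_sub; apply/andP; split; rewrite -(eq_row_base (kermx M)); exact: row_sub.
  apply: leq_trans (mxrankS (submxMr (Nmx F s) sub)).
  by rewrite mul_col_mx !Nmx_Lm // rank_col2.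
rewrite rp rq -/M; apply: leq_trans h1; apply: leq_trans h2; apply: leq_trans h3; by rewrite leq_add2l.
Qed.
End S6.


Theorem corollary4p8 (R : realType) (n d k : nat) (G : edgeset n)
    (p : 'M[R]_(n, d)) (q : 'M[R]_(n.+1, d.+1)) :
  (1 <= d)%N -> (1 <= k)%N ->
  simple_edges G ->
  generic p -> generic q ->
  kfold_circuit (rig_rank p) k G ->
  (exists P : {set edgeset n.+1},
     principal_partition (rig_rank q) k (cone G) P /\
     exists2 A, A \in P & cone_star n \subset A) ->
  k = 1%N.
Proof.
move=> d1 k1 sG gp gq [_ rG] [P [[_ ppP] [A AP starA]]].
set X := cone G :\: A.
have XD : X \subset cone G by apply: subsetDl.
have [_ hX] := (ppP X XD).2 (ex_intro2 _ _ A AP erefl).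
have XL : X \subset [set lift_e e | e in G].
  apply/subsetP => x; rewrite /X /cone !inE => /andP [xA] /orP [xl|xs].
    exact: xl.
  by move: xA; rewrite (subsetP starA x xs).
have hs := rank_sub q XL.
have cL : #|[set lift_e e | e in G]| = #|G|.
  apply: card_imset => -[a b] [a' b'] h; rewrite /lift_e /= in h.
  case: h => h1 h2; congr pair; apply: val_inj => /=; lia.
case: (leqP 2 k) => k2; last by lia.
have := main sG gq rG k2.
rewrite cL in hs; lia.
Qed.
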